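(* Let $A=K[X_1,\ldots,X_n]$ over a field $K$, let $I,J\subseteq A$ be homogeneous ideals with the same Hilbert function, let $\prec$ be a monomial order, and let $G_1$ and $G_2$ be the reduced Gr\''obner bases with respect to $\prec$ of $I$ and $J$ respectively. If $d$ is an integer greater than or equal to the largest degree of an element of $G_1$ and $\operatorname{cs}(I_{\leq d})=\operatorname{cs}(J_{\leq d})$, then $\operatorname{supp}(G_1)=\operatorname{supp}(G_2)$.
   Context: For a nonzero polynomial $f$, $\operatorname{supp}(f)$ is the set of monomials appearing in $f$ with nonzero coefficient; for a set $S$ of polynomials, $\operatorname{supp}(S)=\{\operatorname{supp}(f):f\in S, f\ne0\}$, and the circuits set $\operatorname{cs}(S)$ is the set of inclusion-minimal elements of $\operatorname{supp}(S)$. For a homogeneous ideal $I$, $I_{\leq d}=\bigoplus_{j\le d} I_j$ is the sum of its homogeneous components of degree at most $d$. A reduced Gr\''obner basis is a Gr\''obner basis whose elements are monic and such that no leading monomial of one element divides a monomial in the support of another element. *)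

(* Defs.v *)
From HB Require Import structures.
From mathcomp Require Import all_boot all_order all_algebra.
From mathcomp Require Import finmap.
From mathcomp Require Import mpoly.
From Stdlib Require Import Relations Wellfounded.

Set Implicit Arguments.
Unset Strict Implicit.
Unset Printing Implicit Defensive.

Import Order.TTheory GRing.Theory Num.Theory.
Local Open Scope ring_scope.


Section Defs.
Variables (K : fieldType) (n : nat).
Local Notation A := {mpoly K[n]}.
Local Notation M := ('X_{1..n}).

Definition mdegz (m : M) : int := (mdeg m)%:Z.

Definition hcomp (j : int) (f : A) : A :=
  \sum_(m <- msupp f | mdegz m == j) f@_m *: 'X_[m].

(* f is homogeneous of degree j (0 counts as homogeneous of every degree) *)
Definition is_homog_deg (j : int) (f : A) : Prop :=
  forall m, m \in msupp f -> mdegz m = j.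

Definition is_ideal (I : A -> Prop) : Prop :=
  [/\ I 0,
      (forall f g, I f -> I g -> I (f + g)) &
      (forall f g, I f -> I (g * f))].

Definition homogeneous_ideal (I : A -> Prop) : Prop :=
  is_ideal I /\ (forall f j, I f -> I (hcomp j f)).

Definition lincomb (b : seq A) (c : nat -> K) : A :=
  \sum_(i < size b) c i *: b`_i.

(* the degree-j part (A/I)_j of A/I has dimension r:
   there are r homogeneous polynomials of degree j whose classes form a
   basis of A_j / I_j *)
Definition hilbert_value (I : A -> Prop) (j : int) (r : nat) : Prop :=
  exists b : seq A,
    [/\ size b = r,
        (forall g, g \in b -> is_homog_deg j g),
        (forall c : nat -> K, I (lincomb b c) ->
            forall i, (i < size b)%N -> c i = 0) &
        (forall f, is_homog_deg j f ->
            exists c : nat -> K, exists g : A,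
              [/\ I g, is_homog_deg j g & f = lincomb b c + g])].

Definition same_hilbert_function (I J : A -> Prop) : Prop :=
  forall (j : int) (r : nat), hilbert_value I j r <-> hilbert_value J j r.

Definition monomial_order (le : M -> M -> bool) : Prop :=
  [/\ forall m, le m m,
      (forall m1 m2, le m1 m2 -> le m2 m1 -> m1 = m2),
      (forall m1 m2 m3, le m1 m2 -> le m2 m3 -> le m1 m3),
      (forall m1 m2, le m1 m2 || le m2 m1) &
      ((forall m1 m2 m, le m1 m2 -> le (m1 + m)%MM (m2 + m)%MM) /\
       well_founded (fun m1 m2 => le m1 m2 && (m1 != m2)))].

Definition is_lm (le : M -> M -> bool) (f : A) (m : M) : Prop :=
  m \in msupp f /\ forall m', m' \in msupp f -> le m' m.

Definition groebner_basis (le : M -> M -> bool) (I : A -> Prop) (G : seq A)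
  : Prop :=
  (forall g, g \in G -> I g) /\
  (forall f, I f -> f != 0 -> forall mf, is_lm le f mf ->
     exists2 g, g \in G & exists mg, is_lm le g mg /\ (mg <= mf)%MM).

Definition reduced_groebner_basis (le : M -> M -> bool) (I : A -> Prop)
  (G : seq A) : Prop :=
  [/\ groebner_basis le I G,
      (forall g, g \in G -> exists m, is_lm le g m /\ g@_m = 1) &
      (forall g g', g \in G -> g' \in G -> g != g' ->
         forall mg, is_lm le g mg ->
         forall m, m \in msupp g' -> ~~ (mg <= m)%MM)].

Definition tdeg (f : A) : nat := \max_(m <- msupp f) mdeg m.

(* I_{<= d} = sum of the homogeneous components I_j with j <= d *)
Definition ideal_le (I : A -> Prop) (d : int) (f : A) : Prop :=
  (forall j, I (hcomp j f)) /\ (forall m, m \in msupp f -> mdegz m <= d).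

Definition supp (f : A) : {fset M} := [fset m | m in msupp f]%fset.

Definition supps (S : A -> Prop) (s : {fset M}) : Prop :=
  exists f, [/\ S f, f != 0 & supp f = s].

Definition circuits (S : A -> Prop) (s : {fset M}) : Prop :=
  supps S s /\ (forall t, supps S t -> (t `<=` s)%fset -> t = s).

End Defs.

(* Main.v *)
Require Import Defs.
From HB Require Import structures.
From mathcomp Require Import all_boot all_order all_algebra.
From mathcomp Require Import finmap.
From mathcomp Require Import mpoly.
Set Implicit Arguments.
Unset Strict Implicit.
Unset Printing Implicit Defensive.
Import Order.TTheory GRing.Theory Num.Theory.
Local Open Scope ring_scope.

Section Ord.
Variable n : nat.
Local Notation M := ('X_{1..n}).
Variable le : M -> M -> bool.
Hypothesis Hmo : monomial_order le.

Lemma le_refl m : le m m. Proof. by case: Hmo => h1 h2 h3 h4 h5; apply: h1. Qed.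
Lemma le_anti m1 m2 : le m1 m2 -> le m2 m1 -> m1 = m2. Proof. by case: Hmo => h1 h2 h3 h4 h5; apply: h2. Qed.
Lemma le_tr {m1 m2 m3} : le m1 m2 -> le m2 m3 -> le m1 m3. Proof. by case: Hmo => h1 h2 h3 h4 h5; apply: h3. Qed.
Lemma le_tot m1 m2 : le m1 m2 || le m2 m1. Proof. by case: Hmo => h1 h2 h3 h4 h5; apply: h4. Qed.
Lemma le_add m1 m2 m : le m1 m2 -> le (m1 + m)%MM (m2 + m)%MM. Proof. by case: Hmo => h1 h2 h3 h4 [h5 h6]; apply: h5. Qed.
Lemma le_wf : well_founded (fun m1 m2 => le m1 m2 && (m1 != m2)). Proof. by case: Hmo => h1 h2 h3 h4 [h5 h6]. Qed.

Lemma le0 k : le 0%MM k.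
Proof.
case/orP: (le_tot 0%MM k) => // hk0.
have [->|nk] := eqVneq k 0%MM; first exact: le_refl.
pose f i := iter i (fun x => (x + k)%MM) 0%MM.
suff : forall x, Acc (fun m1 m2 => le m1 m2 && (m1 != m2)) x -> forall i, x <> f i.
  by move/(_ _ (le_wf 0%MM) 0%N).
move=> x; elim=> {}x _ IH i ex.
apply: (IH (f i.+1) _ i.+1 erefl).
rewrite ex /= -[X in le _ X]add0m [(_ + k)%MM]addmC le_add //=.
apply/negP=> /eqP e.
rewrite -[X in _ = X]add0m in e.
by move/addIm: e => e; rewrite e eqxx in nk.
Qed.

Lemma le_div m1 m2 : (m1 <= m2)%MM -> le m1 m2.
Proof.
move=> h; rewrite -(submK h) -[X in le X _]add0m; exact: le_add (le0 _).
Qed.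
End Ord.
Section Gen.
Variables (K : fieldType) (n : nat).
Local Notation A := {mpoly K[n]}.
Local Notation M := ('X_{1..n}).
Variable le : M -> M -> bool.
Hypothesis Hmo : monomial_order le.

Definition maxs (x0 : M) (s : seq M) :=
  foldr (fun a acc => if le acc a then a else acc) x0 s.

Lemma maxsP x0 s : maxs x0 s \in x0 :: s /\ forall y, y \in x0 :: s -> le y (maxs x0 s).
Proof.
elim: s => [|a s [IH1 IH2]] /=.
  by split; [rewrite mem_seq1|move=> y; rewrite mem_seq1 => /eqP ->; apply: (le_refl Hmo)].
case: ifP => h.
  split; first by rewrite !inE eqxx orbT.
  move=> y; rewrite !inE => /or3P [/eqP ->|/eqP ->|ys].
  - exact: (le_tr Hmo (IH2 x0 (mem_head x0 s)) h).
  - exact: (le_refl Hmo).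
  - by have := IH2 y; rewrite inE ys orbT => /(_ isT) hy; exact: (le_tr Hmo hy h).
split; first by move: IH1; rewrite !in_cons => /orP [->|->]; rewrite ?orbT.
have ha : le a (maxs x0 s) by case/orP: (le_tot Hmo (maxs x0 s) a) => //; rewrite h.
move=> y; rewrite !inE => /or3P [/eqP ->|/eqP ->|ys] //; first exact: IH2 (mem_head _ _).
by apply: IH2; rewrite inE ys orbT.
Qed.

Definition lmf (f : A) := maxs (head 0%MM (msupp f)) (msupp f).

Lemma lmfP f : f != 0 -> is_lm le f (lmf f).
Proof.
rewrite -msupp_eq0 /lmf; case E: (msupp f) => [|a s] // _.
rewrite [head _ _]/= /is_lm E.
have [h1 h2] := maxsP a (a :: s).
split; first by move: h1; rewrite inE => /orP [/eqP ->|]; rewrite ?mem_head.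
by move=> y ys; apply: h2; rewrite inE ys orbT.
Qed.

Lemma lm_uniq (f : A) m1 m2 : is_lm le f m1 -> is_lm le f m2 -> m1 = m2.
Proof. by case=> a1 b1 [a2 b2]; apply: (le_anti Hmo); [apply: b2|apply: b1]. Qed.

Lemma lm_neq0 (f : A) m : is_lm le f m -> f != 0.
Proof. by case=> h _; apply/negP => /eqP f0; rewrite f0 msupp0 in h. Qed.

Lemma is_lm_lmf (f : A) m : is_lm le f m -> lmf f = m.
Proof. by move=> h; apply: lm_uniq (lmfP (lm_neq0 h)) h. Qed.

Section Ideal.
Variable I : A -> Prop.
Hypothesis HI : is_ideal I.
Lemma id0 : I 0. Proof. by case: HI. Qed.
Lemma idD f g : I f -> I g -> I (f + g). Proof. by case: HI => _ h _; apply: h. Qed.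
Lemma idM f g : I f -> I (g * f). Proof. by case: HI => _ _ h; apply: h. Qed.
Lemma idZ c f : I f -> I (c *: f). Proof. by rewrite -mul_mpolyC; apply: idM. Qed.
Lemma idN f : I f -> I (- f). Proof. by rewrite -scaleN1r; apply: idZ. Qed.
Lemma idB f g : I f -> I g -> I (f - g). Proof. by move=> hf hg; apply: idD hf (idN hg). Qed.
Lemma id_sum (T : Type) (r : seq T) (P : pred T) (F : T -> A) :
  (forall i, P i -> I (F i)) -> I (\sum_(i <- r | P i) F i).
Proof. move=> h; apply: (big_ind I id0 idD) => //. Qed.
End Ideal.


Lemma hcompE j (f : A) m :
  (hcomp j f)@_m = if mdegz m == j then f@_m else 0.
Proof.
rewrite /hcomp raddf_sum /=.
under eq_bigr => m' _ do rewrite mcoeffZ mcoeffX.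
rewrite big_mkcond /=.
case: (boolP (m \in msupp f)) => hm.
  rewrite (bigD1_seq m) ?msupp_uniq //= eqxx mulr1.
  rewrite big1 ?addr0; last by move=> m' /negbTE ->; rewrite mulr0; case: ifP.
  by case: ifP.
rewrite big1; last first.
  move=> m' _; case: ifP => // _; case: (eqVneq m' m) => [e|ne].
    by rewrite e (memN_msupp_eq0 hm) mul0r.
  by rewrite mulr0.
by rewrite (memN_msupp_eq0 hm); case: ifP.
Qed.

Lemma hcomp_homog j (f : A) : is_homog_deg j (hcomp j f).
Proof.
by move=> m; rewrite mcoeff_msupp hcompE; case: ifP => [/eqP|] //; rewrite eqxx.
Qed.

Lemma hcomp_sum (f : A) N : (forall m, m \in msupp f -> (mdeg m < N)%N) ->
  \sum_(k < N) hcomp (k : nat)%:Z f = f.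
Proof.
move=> hN; apply/mpolyP => m; rewrite raddf_sum /=.
under eq_bigr => k _ do rewrite hcompE.
case: (boolP (m \in msupp f)) => hm.
  rewrite (bigD1 (Ordinal (hN m hm))) //= /mdegz eqxx.
  rewrite big1 ?addr0 //.
  move=> k /negbTE nk; case: ifP => // /eqP [e].
  have ek : k = Ordinal (hN m hm) by apply: val_inj; rewrite /= e.
  by rewrite ek eqxx in nk.
by rewrite (memN_msupp_eq0 hm) big1 // => k _; case: ifP.
Qed.

Section HIdeal.
Variable I : A -> Prop.
Hypothesis HI : homogeneous_ideal I.
Lemma hid : is_ideal I. Proof. by case: HI. Qed.
Lemma hid_comp f j : I f -> I (hcomp j f). Proof. by case: HI => _ h; apply: h. Qed.
Lemma ideal_le_in d f : ideal_le I d f -> I f.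
Proof.
case=> h _; rewrite -(@hcomp_sum f (msize f)); last by move=> m; apply: msize_mdeg_lt.
by apply: (id_sum hid) => k _; apply: h.
Qed.
End HIdeal.

Lemma homog0 j : is_homog_deg j (0 : A).
Proof. by move=> m; rewrite msupp0. Qed.
Lemma homogD j (f g : A) : is_homog_deg j f -> is_homog_deg j g -> is_homog_deg j (f + g).
Proof. by move=> hf hg m /msuppD_le; rewrite mem_cat => /orP [/hf|/hg]. Qed.
Lemma homogB j (f g : A) : is_homog_deg j f -> is_homog_deg j g -> is_homog_deg j (f - g).
Proof. by move=> hf hg m /msuppB_le; rewrite mem_cat => /orP [/hf|/hg]. Qed.
Lemma homogZ j c (f : A) : is_homog_deg j f -> is_homog_deg j (c *: f).
Proof. by move=> hf m /msuppZ_le /hf. Qed.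

Definition lincombX (s : seq M) (c : nat -> K) : A := lincomb [seq 'X_[m] | m <- s] c.

Lemma lincombX_coef s c m : uniq s ->
  (lincombX s c)@_m = if m \in s then c (index m s) else 0.
Proof.
move=> us; rewrite /lincombX /lincomb raddf_sum /= size_map.
under eq_bigr => i _ do rewrite (nth_map 0%MM) // mcoeffZ mcoeffX.
case: ifP => hm.
  have hi : (index m s < size s)%N by rewrite index_mem.
  rewrite (bigD1 (Ordinal hi)) //=.
  rewrite nth_index // eqxx mulr1 big1 ?addr0 // => i ni.
  case: eqP => [e|]; last by rewrite mulr0.
  have ei : i = Ordinal hi by apply: val_inj; rewrite /= -e index_uniq.
  by rewrite ei eqxx in ni.
rewrite big1 // => i _; case: eqP => [e|]; last by rewrite mulr0.
by move: hm; rewrite -e mem_nth.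
Qed.

Section GB.
Variable I : A -> Prop.
Variable G : seq A.
Hypothesis HI : homogeneous_ideal I.
Hypothesis HG : groebner_basis le I G.

Definition std (m : M) := ~~ has (fun g => (g != 0) && (lmf g <= m)%MM) G.

Lemma gb_div f : I f -> f != 0 -> ~~ std (lmf f).
Proof.
move=> If f0; case: HG => _ /(_ f If f0 _ (lmfP f0)) [g gG [mg [hl hd]]].
rewrite negbK; apply/hasP; exists g => //.
by rewrite (lm_neq0 hl) (is_lm_lmf hl).
Qed.

Lemma rigid u : I u -> (forall m, m \in msupp u -> std m) -> u = 0.
Proof.
move=> Iu hs; apply/eqP/negP => /negP u0.
by have := gb_div Iu u0; rewrite hs //; case: (lmfP u0).
Qed.

Lemma indep s c : uniq s -> all std s -> I (lincombX s c) ->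
  forall i, (i < size s)%N -> c i = 0.
Proof.
move=> us als Ip i hi.
have p0 : lincombX s c = 0.
  apply: rigid => // m; rewrite mcoeff_msupp lincombX_coef //.
  by case: ifP => [ms _|]; [apply: (allP als)|rewrite eqxx].
have := congr1 (mcoeff (nth 0%MM s i)) p0.
by rewrite lincombX_coef // mem_nth // index_uniq // mcoeff0.
Qed.

Definition claim j (f : A) := exists g, [/\ I g, is_homog_deg j g &
  forall m, m \in msupp (f - g) -> std m].

Lemma maxns (f : A) m : m \in msupp f -> ~~ std m ->
  exists m0, [/\ m0 \in msupp f, ~~ std m0 &
     forall m', m' \in msupp f -> ~~ std m' -> le m' m0].
Proof.
move=> hm hs.
have hin : m \in [seq x <- msupp f | ~~ std x] by rewrite mem_filter hs hm.
case E: [seq x <- msupp f | ~~ std x] hin => [|a s] //= _.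
have [h1 h2] := maxsP a (a :: s).
exists (maxs a (a :: s)).
have hm0 : maxs a (a :: s) \in [seq x <- msupp f | ~~ std x].
  by rewrite E; move: h1; rewrite in_cons => /orP [/eqP ->|]; rewrite ?mem_head.
move: hm0; rewrite mem_filter => /andP [-> ->]; split => // m' hm' hs'.
by apply: h2; rewrite in_cons -E mem_filter hs' hm' orbT.
Qed.


Lemma reduce j f m : is_homog_deg j f -> m \in msupp f -> ~~ std m ->
  (forall m', m' \in msupp f -> ~~ std m' -> le m' m) ->
  exists h, [/\ I h, is_homog_deg j h &
    forall m', m' \in msupp (f - h) -> ~~ std m' -> le m' m && (m' != m)].
Proof.
move=> hf hm hs hmax.
move: (hs); rewrite negbK => /hasP [g gG /andP [g0 hd]].
have [lg1 lg2] := lmfP g0.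
set k := (m - lmf g)%MM.
have ekm : (k + lmf g)%MM = m by rewrite addmC /k addmC submK.
set h0 := g * 'X_[k].
have Ih0 : I h0 by rewrite /h0 mulrC; apply: (idM (hid HI)); case: HG => /(_ g gG).
have h0m : h0@_m = g@_(lmf g) by rewrite -ekm /h0 mcoeffMX.
have h0le : forall m', m' \in msupp h0 -> le m' m.
  move=> m'; rewrite (perm_mem (msuppMX g k)) => /mapP [m'' hm'' ->].
  by rewrite -ekm addmC [(k + lmf g)%MM]addmC; apply: le_add => //; apply: lg2.
set h1 := hcomp j h0.
have hmj : mdegz m = j by apply: hf.
have h1m : h1@_m = h0@_m by rewrite /h1 hcompE hmj eqxx.
have h1m0 : h1@_m != 0 by rewrite h1m h0m -mcoeff_msupp.
have h1le : forall m', m' \in msupp h1 -> le m' m.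
  by move=> m'; rewrite mcoeff_msupp /h1 hcompE; case: ifP => _; rewrite ?eqxx // -mcoeff_msupp; apply: h0le.
exists ((f@_m / h1@_m) *: h1); split.
- by apply: (idZ (hid HI)); apply: hid_comp.
- by apply: homogZ; apply: hcomp_homog.
move=> m' hm' hs'.
have nm : m' != m.
  apply/eqP => e; move: hm'; rewrite e mcoeff_msupp mcoeffB mcoeffZ.
  by rewrite mulfVK // subrr eqxx.
rewrite nm andbT.
move/msuppB_le: hm'; rewrite mem_cat => /orP [/hmax|/msuppZ_le /h1le] //.
by apply.
Qed.

Lemma claimP j f : is_homog_deg j f -> claim j f.
Proof.
move: f.
have base : forall f, (forall m, m \in msupp f -> std m) -> claim j f.
  by move=> f' h; exists 0; split => //; [apply: (id0 (hid HI))|apply: homog0|rewrite subr0].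
suff P : forall m0 f, is_homog_deg j f ->
   (forall m', m' \in msupp f -> ~~ std m' -> le m' m0) -> claim j f.
  move=> f hf; case: (boolP (all std (msupp f))) => [/allP|/allPn [m hm hs]].
    by apply: base.
  by have [m0 [_ _ hmax]] := maxns hm hs; apply: (P m0).
move=> m0; elim/(well_founded_ind (le_wf Hmo)): m0 => m0 IH f hf hle.
case: (boolP (all std (msupp f))) => [/allP|/allPn [m1 hm1 hs1]]; first by apply: base.
have [m [hm hs hmax]] := maxns hm1 hs1.
have [h [Ih hh hr]] := reduce hf hm hs hmax.
have hf' : is_homog_deg j (f - h) by apply: homogB.
case: (boolP (all std (msupp (f - h)))) => [/allP hall|/allPn [m2 hm2 hs2]].
  exists h; split => //.
have [m' [hm' hs' hmax']] := maxns hm2 hs2.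
have /andP [lm' nm'] := hr _ hm' hs'.
have hlt : le m' m0 && (m' != m0).
  have lmm0 := hle _ hm hs.
  rewrite (le_tr Hmo lm' lmm0) /=; apply/eqP => e.
  by move: nm'; rewrite (le_anti Hmo lm') ?eqxx // e.
have [g' [Ig' hg' hr']] := IH m' hlt (f - h) hf' hmax'.
exists (h + g'); split.
- exact: (idD (hid HI)).
- exact: homogD.
- by move=> m3; rewrite opprD addrA; apply: hr'.
Qed.


Lemma span j S : uniq S -> (forall m, mdegz m = j -> std m -> m \in S) ->
  forall f, is_homog_deg j f -> exists c, exists g,
    [/\ I g, is_homog_deg j g & f = lincombX S c + g].
Proof.
move=> uS hS f hf; have [g [Ig hg hr]] := claimP hf.
exists (fun i => (f - g)@_(nth 0%MM S i)), g; split => //.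
rewrite -[LHS](subrK g); congr (_ + _); apply/mpolyP => m.
rewrite lincombX_coef //; case: ifP => hm; first by rewrite nth_index.
apply/eqP; rewrite mcoeff_eq0; apply/negP => hq.
by move: hm; rewrite hS ?hr //; apply: homogB hq.
Qed.

Lemma hilbP j S : uniq S -> all std S -> (forall m, m \in S -> mdegz m = j) ->
  (forall m, mdegz m = j -> std m -> m \in S) ->
  hilbert_value I j (size S).
Proof.
move=> uS aS dS hS; exists [seq 'X_[m] | m <- S]; split.
- by rewrite size_map.
- by move=> g /mapP [m mS ->] m'; rewrite msuppX mem_seq1 => /eqP ->; apply: dS.
- by move=> c Ic; rewrite size_map; apply: indep.
- by move=> f hf; apply: span.
Qed.

End GB.

Lemma lincombXE S c : lincombX S c = \sum_(l < size S) c l *: 'X_[nth 0%MM S l].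
Proof.
rewrite /lincombX /lincomb size_map; apply: eq_bigr => l _; by rewrite (nth_map 0%MM).
Qed.

Definition cf r (v : 'rV[K]_r) (l : nat) : K :=
  if insub l is Some t then v 0 t else 0.

Lemma cfE r (v : 'rV[K]_r) (t : 'I_r) : cf v t = v 0 t.
Proof. by rewrite /cf valK. Qed.

Lemma steinitz (J : A -> Prop) (HJ : is_ideal J) (b : seq A) (S : seq M) :
  (forall c, J (lincomb b c) -> forall i, (i < size b)%N -> c i = 0) ->
  (forall i, (i < size b)%N -> exists c, exists g, J g /\ b`_i = lincombX S c + g) ->
  (size b <= size S)%N.
Proof.
move=> hind hspan; rewrite leqNgt; apply/negP => hlt.
set k := size b in hind hspan hlt; set r := size S in hlt.
have : forall i : 'I_k, exists v : 'rV[K]_r, J (b`_i - lincombX S (cf v)).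
  move=> i; have [c [g [Jg e]]] := hspan i (ltn_ord i).
  exists (\row_(l < r) c l); rewrite e.
  suff -> : lincombX S (cf (\row_(l < r) c l)) = lincombX S c by rewrite addrC addKr.
  by rewrite !lincombXE; apply: eq_bigr => l _; rewrite cfE mxE.
case/fin_all_exists => V hV.
pose C : 'M[K]_(k, r) := \matrix_(i, l) V i 0 l.
have : kermx C != 0.
  rewrite -mxrank_eq0 mxrank_ker subn_eq0 -ltnNge.
  exact: leq_ltn_trans (rank_leq_col C) hlt.
move=> /eqP hk; have [t ht] : exists t, row t (kermx C) != 0.
  case: (boolP [exists t, row t (kermx C) != 0]) => [/existsP //|].
  rewrite negb_exists => /forallP hall; exfalso; apply: hk.
  by apply/row_matrixP => t; rewrite row0; apply/eqP; rewrite -[_ == _]negbK hall.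
set x := row t (kermx C) in ht.
have xC : x *m C = 0 by rewrite /x -row_mul mulmx_ker row0.
clearbody x.
have Jx : J (lincomb b (cf x)).
  have -> : lincomb b (cf x) = \sum_(i < k) x 0 i *: (b`_i - lincombX S (cf (V i))).
    rewrite /lincomb.
    under [RHS]eq_bigr => i _ do rewrite scalerBr.
    rewrite sumrB.
    suff -> : \sum_(i < k) x 0 i *: lincombX S (cf (V i)) = 0.
      by rewrite subr0; apply: eq_bigr => i _; rewrite cfE.
    under eq_bigr => i _ do rewrite lincombXE scaler_sumr.
    rewrite exchange_big /=; apply: big1 => l _.
    under eq_bigr => i _ do rewrite scalerA cfE.
    rewrite -scaler_suml.
    have : (x *m C) 0 l = 0 by rewrite xC mxE.
    rewrite mxE; under eq_bigr => i _ do rewrite mxE.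
    by move=> ->; rewrite scale0r.
  by apply: (id_sum HJ) => i _; apply: (idZ HJ).
have h0 := hind _ Jx; move/negP: ht; apply; apply/eqP/rowP => i.
by rewrite mxE -cfE h0.
Qed.

Lemma suppE (f : A) m : (m \in supp f) = (m \in msupp f).
Proof. by rewrite /supp in_fset. Qed.

Lemma supp_eq (f g : A) : msupp f =i msupp g -> supp f = supp g.
Proof. by move=> h; apply/fsetP => m; rewrite !suppE h. Qed.

Lemma lmf_eq (f g : A) : msupp f =i msupp g -> g != 0 -> lmf f = lmf g.
Proof.
move=> e g0; apply: is_lm_lmf; have [h1 h2] := lmfP g0.
by split; [rewrite e|move=> m'; rewrite e; apply: h2].
Qed.

Lemma msupp_scale c (f : A) : c != 0 -> msupp (c *: f) =i msupp f.
Proof. by move=> c0; apply: perm_mem; apply: msuppZ. Qed.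

Lemma count_mono (T : seq M) (p q : pred M) : (forall x, x \in T -> p x -> q x) ->
  (count p T <= count q T)%N.
Proof.
elim: T => [|a T IH] hpq //=; apply: leq_add.
  by case: (boolP (p a)) => // /(hpq a (mem_head _ _)) ->.
by apply: IH => x xT; apply: hpq; rewrite in_cons xT orbT.
Qed.

Lemma count_lt (T : seq M) (p q : pred M) : (forall x, x \in T -> p x -> q x) ->
  (exists2 x, x \in T & q x && ~~ p x) -> (count p T < count q T)%N.
Proof.
elim: T => [|a T IH] hpq [x] //; rewrite in_cons /= => /orP [/eqP ->|xT] hx.
  case/andP: hx => -> /negbTE ->; rewrite add0n add1n ltnS.
  by apply: count_mono => y yT; apply: hpq; rewrite in_cons yT orbT.
apply: leq_trans (_ : p a + count p T < p a + count q T)%N _.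
  by rewrite ltn_add2l; apply: IH; [move=> y yT; apply: hpq; rewrite in_cons yT orbT|exists x].
rewrite leq_add2r; case: (boolP (p a)) => // /(hpq a (mem_head _ _)) ->. done.
Qed.

Section Red.
Variable I : A -> Prop.
Variable G : seq A.
Hypothesis HI : homogeneous_ideal I.
Hypothesis HG : reduced_groebner_basis le I G.

Lemma rgb : groebner_basis le I G. Proof. by case: HG. Qed.

Lemma G_lc g : g \in G -> g != 0 /\ g@_(lmf g) = 1.
Proof.
case: HG => _ h _ gG; have [m [hl e]] := h g gG.
by split; [apply: lm_neq0 hl|rewrite (is_lm_lmf hl)].
Qed.

Lemma G_in g : g \in G -> I g. Proof. by case: rgb => h _ /h. Qed.

Lemma red_cl g g' m : g \in G -> g' \in G -> g != g' -> m \in msupp g' ->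
  ~~ (lmf g <= m)%MM.
Proof.
case: HG => _ _ h gG g'G ne hm.
by apply: (h g g' gG g'G ne (lmf g) (lmfP (proj1 (G_lc gG)))).
Qed.

Lemma red_nd g m g'' : g \in G -> m \in msupp g -> m != lmf g -> g'' \in G ->
  ~~ (lmf g'' <= m)%MM.
Proof.
move=> gG hm ne g''G; case: (eqVneq g'' g) => [->|ng]; last exact: (red_cl g''G gG ng hm).
apply/negP => /(le_div Hmo) h1; move/negP: ne; apply.
have [_ h2] := lmfP (proj1 (G_lc gG)).
by apply/eqP; apply: (le_anti Hmo) => //; apply: h2.
Qed.

Lemma red_std g m : g \in G -> m \in msupp g -> m != lmf g -> std G m.
Proof.
move=> gG hm ne; apply/hasPn => g'' g''G; apply/negP => /andP [_ h].
by move: h; apply/negP; exact: (red_nd gG hm ne g''G).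
Qed.

Lemma circ g f : g \in G -> I f -> f != 0 -> {subset msupp f <= msupp g} ->
  msupp f =i msupp g.
Proof.
move=> gG If f0 sub.
have [g0 g1] := G_lc gG.
have [hf1 hf2] := lmfP f0.
have emf : lmf f = lmf g.
  apply/eqP; apply/negP => /negP ne.
  by move: (red_std gG (sub _ hf1) ne); apply/negP; apply: (gb_div rgb).
set c := f@_(lmf f).
have c0 : c != 0 by rewrite /c -mcoeff_msupp.
have u0 : f - c *: g = 0.
  apply: (rigid rgb); first by apply: (idB (hid HI)) => //; apply: (idZ (hid HI)); apply: G_in.
  move=> m hm.
  have ne : m != lmf g.
    apply/eqP => e; move: hm; rewrite e mcoeff_msupp mcoeffB mcoeffZ g1 mulr1 -emf.
    by rewrite subrr eqxx.
  apply: (red_std gG _ ne).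
  by move/msuppB_le: hm; rewrite mem_cat => /orP [/sub|/msuppZ_le].
have -> : f = c *: g by apply/eqP; rewrite -subr_eq0 u0.
exact: msupp_scale.
Qed.

End Red.

Section Main.
Variables (I J : A -> Prop) (G1 G2 : seq A) (d : int).
Hypotheses (HI : homogeneous_ideal I) (HJ : homogeneous_ideal J).
Hypothesis Hh : same_hilbert_function I J.
Hypotheses (HG1 : reduced_groebner_basis le I G1) (HG2 : reduced_groebner_basis le J G2).
Hypothesis Hd : forall g, g \in G1 -> ((tdeg g)%:Z <= d)%R.
Hypothesis Hc : forall s, circuits (ideal_le I d) s <-> circuits (ideal_le J d) s.

Lemma S2 g1 : g1 \in G1 -> exists h, [/\ J h, h != 0 & msupp h =i msupp g1].
Proof.
move=> gG; have [g0 _] := G_lc HG1 gG.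
have circI : circuits (ideal_le I d) (supp g1).
  split.
    exists g1; split => //; split => [j|m hm]; first by apply: (hid_comp HI); apply: (G_in HG1).
    apply: le_trans (Hd gG); rewrite /mdegz lez_nat /tdeg.
    exact: (leq_bigmax_seq _ hm).
  move=> t [f [hf f0 <-]] sub; apply: supp_eq.
  apply: (circ HI HG1 gG (ideal_le_in HI hf) f0) => m; rewrite -!suppE; apply: (fsubsetP sub).
have [[h [hJ h0 eh]] _] := (Hc _).1 circI.
exists h; split => //; first exact: (ideal_le_in HJ hJ).
by move=> m; rewrite -!suppE eh.
Qed.

Lemma S3 m : ~~ std G1 m -> ~~ std G2 m.
Proof.
rewrite !negbK => /hasP [g1 g1G /andP [g10 hd]].
have [h [hJ h0 eh]] := S2 g1G.
have := gb_div (rgb HG2) hJ h0; rewrite negbK => /hasP [g2 g2G /andP [g20 hd2]].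
apply/hasP; exists g2 => //; rewrite g20 /=; apply: lepm_trans hd.
by rewrite -(lmf_eq eh g10).
Qed.


Lemma S4 m : ~~ std G2 m -> ~~ std G1 m.
Proof.
move=> h2; apply/negP => h1.
set j := mdeg m.
set T := [seq x <- map (@bmnm n j.+1) (enum {: 'X_{1..n < j.+1}}) | mdeg x == j].
have Tu : uniq T by rewrite filter_uniq // map_inj_uniq ?enum_uniq //; apply: val_inj.
have Tm : forall m', mdeg m' = j -> m' \in T.
  move=> m' e; rewrite mem_filter e eqxx /=.
  have hb : (mdeg m' < j.+1)%N by rewrite e.
  by apply/mapP; exists (BMultinom hb); rewrite ?mem_enum.
have Td : forall m', m' \in T -> mdeg m' = j by move=> m'; rewrite mem_filter => /andP [/eqP].
set S1 := filter (std G1) T; set S2' := filter (std G2) T.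
have hv1 : hilbert_value I j%:Z (size S1).
  apply: (hilbP HI (rgb HG1)).
  - exact: filter_uniq.
  - exact: filter_all.
  - by move=> m'; rewrite mem_filter => /andP [_ /Td] <-.
  - by move=> m' [e] hs; rewrite mem_filter hs Tm.
have [b [sb hb hind hspan]] := (Hh j%:Z (size S1)).1 hv1.
have hle : (size b <= size S2')%N.
  apply: (steinitz (hid HJ) hind) => i hi.
  have hS : forall m', mdegz m' = j%:Z -> std G2 m' -> m' \in S2'.
    by move=> m' [e] hs; rewrite mem_filter hs Tm.
  have [c [g [Jg _ e]]] := span HJ (rgb HG2) (filter_uniq _ Tu) hS (hb _ (mem_nth 0 hi)).
  by exists c, g.
have : (size S2' < size S1)%N.
  rewrite !size_filter; apply: count_lt.
    by move=> x _ hx; case: (boolP (std G1 x)) => // /S3; rewrite hx.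
  by exists m; [apply: Tm|rewrite h1].
by rewrite -sb ltnNge hle.
Qed.


Lemma Match g1 g2 : g1 \in G1 -> g2 \in G2 -> lmf g1 = lmf g2 ->
  msupp g2 =i msupp g1.
Proof.
move=> g1G g2G e12.
have [g10 g11] := G_lc HG1 g1G; have [g20 g21] := G_lc HG2 g2G.
have [h [hJ h0 eh]] := S2 g1G.
set m := lmf g1 in e12 g11.
have hm0 : h@_m != 0 by rewrite -mcoeff_msupp eh; case: (lmfP g10).
set c := (h@_m)^-1.
have g2m : g2@_m = 1 by rewrite e12.
have u0 : g2 - c *: h = 0.
  apply: (rigid (rgb HG2)).
    by apply: (idB (hid HJ)); [apply: (G_in HG2)|apply: (idZ (hid HJ))].
  move=> m' hm'.
  have ne : m' != m.
    apply/eqP => e; move: hm'; rewrite e mcoeff_msupp mcoeffB mcoeffZ g2m /c mulVf //.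
    by rewrite subrr eqxx.
  move/msuppB_le: hm'; rewrite mem_cat => /orP [hg2|/msuppZ_le hh].
    by apply: (red_std HG2 g2G hg2); rewrite -e12.
  rewrite eh in hh; case: (boolP (std G2 m')) => // /S4.
  by rewrite (red_std HG1 g1G hh ne).
have e : g2 = c *: h by apply/eqP; rewrite -subr_eq0 u0.
by move=> x; rewrite e msupp_scale ?eh // invr_neq0.
Qed.

Lemma self_nstd (G : seq A) g : g \in G -> g != 0 -> ~~ std G (lmf g).
Proof. by move=> gG g0; rewrite negbK; apply/hasP; exists g => //; rewrite g0 lepm_refl. Qed.

Lemma lem_anti' (m1 m2 : M) : (m1 <= m2)%MM -> (m2 <= m1)%MM -> m1 = m2.
Proof. by move=> /(le_div Hmo) h1 /(le_div Hmo) h2; apply: (le_anti Hmo). Qed.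

Lemma dir1 g1 : g1 \in G1 -> exists2 g2, g2 \in G2 & lmf g2 = lmf g1.
Proof.
move=> g1G; have [g10 _] := G_lc HG1 g1G.
have [h [hJ h0 eh]] := S2 g1G.
have := gb_div (rgb HG2) hJ h0; rewrite negbK (lmf_eq eh g10) => /hasP [g2 g2G /andP [g20 hd2]].
exists g2 => //.
have := S4 (self_nstd g2G g20); rewrite negbK => /hasP [g1' g1'G /andP [_ hd1]].
case: (eqVneq g1' g1) => [e|ne].
  by rewrite e in hd1; apply: lem_anti'.
have := red_cl HG1 g1'G g1G ne (proj1 (lmfP g10)).
by rewrite (lepm_trans hd1 hd2).
Qed.

Lemma dir2 g2 : g2 \in G2 -> exists2 g1, g1 \in G1 & lmf g1 = lmf g2.
Proof.
move=> g2G; have [g20 _] := G_lc HG2 g2G.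
have := S4 (self_nstd g2G g20); rewrite negbK => /hasP [g1 g1G /andP [g10 hd1]].
exists g1 => //.
have [h [hJ h0 eh]] := S2 g1G.
have := gb_div (rgb HG2) hJ h0; rewrite negbK (lmf_eq eh g10) => /hasP [g2' g2'G /andP [_ hd2]].
case: (eqVneq g2' g2) => [e|ne].
  by rewrite e in hd2; apply: lem_anti'.
have := red_cl HG2 g2'G g2G ne (proj1 (lmfP g20)).
by rewrite (lepm_trans hd2 hd1).
Qed.

Lemma main_res s : supps (fun g => g \in G1) s <-> supps (fun g => g \in G2) s.
Proof.
split => [[f [fG f0 <-]]|[f [fG f0 <-]]].
  have [g2 g2G e] := dir1 fG.
  exists g2; split => //; first exact: (G_lc HG2 g2G).1.
  by apply: supp_eq; apply: Match fG g2G (esym e).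
have [g1 g1G e] := dir2 fG.
exists g1; split => //; first exact: (G_lc HG1 g1G).1.
by apply: supp_eq => x; rewrite (Match g1G fG e).
Qed.

End Main.
End Gen.

Theorem proposition2p11 (K : fieldType) (n : nat)
  (I J : {mpoly K[n]} -> Prop) (le : 'X_{1..n} -> 'X_{1..n} -> bool)
  (G1 G2 : seq {mpoly K[n]}) (d : int) :
  homogeneous_ideal I -> homogeneous_ideal J ->
  same_hilbert_function I J ->
  monomial_order le ->
  reduced_groebner_basis le I G1 ->
  reduced_groebner_basis le J G2 ->
  (forall g, g \in G1 -> ((tdeg g)%:Z <= d)%R) ->
  (forall s, circuits (ideal_le I d) s <-> circuits (ideal_le J d) s) ->
  forall s, supps (fun g => g \in G1) s <-> supps (fun g => g \in G2) s.
Proof.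
move=> HI HJ Hh Hmo HG1 HG2 Hd Hc s.
exact: (main_res Hmo HI HJ Hh HG1 HG2 Hd Hc).
Qed.
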